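(* Let $p$ be an odd prime, $m\ge1$, $Q=T_{(p^m)}$, $K=K_Q(p)$ and $n\ge1$. An element $M=M_1\otimes M_2\otimes\cdots\otimes M_n\in K^{\otimes n}$ satisfies $M^p=\mathbbm{1}$ if there exists a subset $I\subset\{1,\dots,n\}$ such that: for all $i\notin I$, $M_i=S_{\xi_i}X^{b_i}$ with $b_i\neq0$; and for all $i\in I$, $M_i=S_{\xi_i}\in Q$ with $\vartheta^{(i)}_{j,a}=0$ for all $j\ge2$ and $a\neq0$, and $\sum_{i\in I}\vartheta^{(i)}_{2,0}\equiv0\bmod p$.
   Context: Let $\{|q\rangle:q\in\mathbb{Z}_p\}$ be the computational basis of $\mathbb{C}^p$ and $X|q\rangle=|q+1\rangle$. For $\xi:\mathbb{Z}_p\to U(1)$ let $S_\xi=\mathrm{diag}(\xi(0),\dots,\xi(p-1))$. $T=\{S_\xi:\prod_{q}\xi(q)=1\}$ and $T_{(p^k)}=\{S\in T:S^{p^k}=\mathbbm{1}\}$. $K_Q(p)$ is the subgroup of $SU(p)$ generated by all $S_\xi X^b$ with $S_\xi\in Q$, $b\in\mathbb{Z}_p$; $K^{\otimes n}$ is the group of Kronecker products $M_1\otimes\cdots\otimes M_n$ with $M_i\in K$. Every $S_\xi\in T_{(p^m)}$ has a unique expansion $\xi(q)=\exp\big(\sum_{j=1}^m\frac{2\pi i}{p^j}\sum_{a=0}^{p-1}\vartheta_{j,a}q^a\big)$ with $\vartheta_{j,a}\in\{0,\dots,p-1\}$; $\vartheta^{(i)}_{j,a}$ denote these coefficients for $\xi_i$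 (coefficients with $j>m$ are taken to be $0$). *)

(* Defs.v *)
From HB Require Import structures.
From mathcomp Require Import all_boot all_order all_algebra.
From mathcomp Require Import reals trigo.
From mathcomp Require Import complex.
Set Implicit Arguments. Unset Strict Implicit. Unset Printing Implicit Defensive.
Import Order.TTheory GRing.Theory Num.Theory.
Local Open Scope ring_scope.

Section Defs.
Variable R : realType.
Local Notation C := (complex R).

Definition expi (t : R) : C := (cos (2 * pi * t) +i* sin (2 * pi * t))%C.

Variable p : nat.

Definition Smx (xi : 'I_p -> C) : 'M[C]_p := diag_mx (\row_q xi q).

(* X |q> = |q+1> : X_{r,c} = 1 iff r = c + 1 (mod p) *)
Definition Xmx : 'M[C]_p :=
  \matrix_(r < p, c < p) (if (r : nat) == (c.+1 %% p)%N then 1 else 0).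

Definition inT (A : 'M[C]_p) : Prop :=
  exists xi : 'I_p -> C,
    [/\ forall q, `|xi q| = 1, \prod_q xi q = 1 & A = Smx xi].

Definition inTpow (k : nat) (A : 'M[C]_p) : Prop :=
  inT A /\ A ^+ (p ^ k) = 1.

Inductive inK (m : nat) : 'M[C]_p -> Prop :=
  | inK_gen (xi : 'I_p -> C) (b : 'I_p) :
      inTpow m (Smx xi) -> inK m (Smx xi *m Xmx ^+ b)
  | inK_one : inK m 1
  | inK_mul A B : inK m A -> inK m B -> inK m (A * B)
  | inK_inv A : inK m A -> inK m (invmx A).

(* theta is the (unique) expansion of xi in T_(p^m):
   xi(q) = exp( sum_{j=1}^m 2 pi i / p^j * sum_{a=0}^{p-1} theta_{j,a} q^a ),
   with theta_{j,a} in {0,..,p-1}; coefficients outside 1<=j<=m, a<p are 0. *)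
Definition is_expansion (m : nat) (theta : nat -> nat -> nat)
    (xi : 'I_p -> C) : Prop :=
  [/\ forall j a, (theta j a < p)%N,
      forall j a, [|| j == 0%N, (m < j)%N | (p <= a)%N] -> theta j a = 0%N &
      forall q : 'I_p,
        xi q = expi (\sum_(1 <= j < m.+1) \sum_(0 <= a < p)
                       ((theta j a)%:R * ((q : nat) ^ a)%:R / (p ^ j)%:R))].

(* Kronecker product M_1 (x) ... (x) M_n, as a matrix on (C^p)^(x n) whose
   basis |x_1 ... x_n> is indexed by x : {ffun 'I_n -> 'I_p}
   (enumerated in the order of enum). *)
Definition kron (n : nat) (M : 'I_n -> 'M[C]_p)
    : 'M[C]_(#|{ffun 'I_n -> 'I_p}|) :=
  let F := {ffun 'I_n -> 'I_p} in
  \matrix_(r < #|F|, c < #|F|)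
     \prod_(i < n) M i ((enum_val r : F) i) ((enum_val c : F) i).

End Defs.

(* Main.v *)
Require Import Defs.
From HB Require Import structures.
From mathcomp Require Import all_boot all_order all_algebra.
From mathcomp Require Import reals trigo.
From mathcomp Require Import complex.
From mathcomp Require Import ring lra zify fingroup perm.
Set Implicit Arguments. Unset Strict Implicit. Unset Printing Implicit Defensive.
Import Order.TTheory GRing.Theory Num.Theory.
Local Open Scope ring_scope.
Section E.
Variable R : realType.
Local Notation C := (complex R).

Lemma expiD (x y : R) : expi (x + y) = expi x * expi y.
Proof.
rewrite /expi mulrDr cosD sinD; apply/eqP; rewrite eq_complex /=.
by rewrite !eqxx /= addrC (mulrC (sin _)).
Qed.

Lemma expi0 : expi (0 : R) = 1.
Proof. by rewrite /expi mulr0 cos0 sin0. Qed.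

Lemma expi1 : expi (1 : R) = 1.
Proof. by rewrite /expi mulr1 mulr_natl cos2pi sin2pi. Qed.

Lemma expin (k : nat) : expi (k%:R : R) = 1.
Proof.
elim: k => [|k IH]; first by rewrite expi0.
by rewrite -addn1 natrD expiD IH expi1 mulr1.
Qed.

Lemma expiX (x : R) k : expi x ^+ k = expi (k%:R * x).
Proof.
elim: k => [|k IH]; first by rewrite expr0 mul0r expi0.
by rewrite exprS IH -expiD -addn1 natrD mulrDl mul1r addrC.
Qed.

Lemma expi_sum (I : Type) (s : seq I) (P : pred I) (F : I -> R) :
  expi (\sum_(i <- s | P i) F i) = \prod_(i <- s | P i) expi (F i).
Proof. exact: (big_morph _ expiD expi0). Qed.

Lemma expi_eq1 (u : R) : 0 <= u < 1 -> expi u = 1 -> u = 0.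
Proof.
move=> /andP[u0 u1] /eqP; rewrite /expi eq_complex /= => /andP[/eqP hc _].
have hs : sin (pi * u) = 0.
  have : cos (pi * u *+ 2) = 1.
    by rewrite -hc -mulrA mulr_natl.
  rewrite cos_mulr2n cos2sin2 => h.
  have : sin (pi * u) ^+ 2 = 0.
    move: h; set y := sin (pi * u) ^+ 2; rewrite mulr2n => h; lra.
  by move/eqP; rewrite expf_eq0 /= => /eqP.
apply/eqP; rewrite le0r in u0; case/orP: u0 => // u0.
have : 0 < sin (pi * u).
  apply: sin_gt0_pi; rewrite mulr_gt0 ?pi_gt0 //=.
  by rewrite gtr_pMr ?pi_gt0.
by rewrite hs ltxx.
Qed.

Lemma geo (pr : R) (a k : nat) : pr != 0 ->
  \sum_(a <= j < a + k) (pr - 1) / pr ^+ j = pr / pr ^+ a - pr / pr ^+ (a + k).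
Proof.
move=> pr0; elim: k => [|k IH]; first by rewrite addn0 big_geq // subrr.
rewrite addnS big_nat_recr ?leq_addr //= IH exprS.
have x0 : pr ^+ (a + k) != 0 by rewrite expf_neq0.
by field; rewrite x0 pr0 expf_neq0.
Qed.

Variable p' : nat.
Local Notation P := p'.+2.

Lemma xiP (xi : 'I_P -> C) (m : nat) (th : nat -> nat -> nat) :
  (1 <= m)%N -> is_expansion m th xi ->
  (forall j a, (2 <= j)%N -> a != 0%N -> th j a = 0%N) -> \prod_q xi q = 1 ->
  forall q, xi q ^+ P = expi ((th 2%N 0%N)%:R / P%:R).
Proof.
move=> m1 [thlt th0 Hxi] Hth Hprod.
set pr : R := P%:R.
have pr0 : pr != 0 by rewrite pnatr_eq0.
set t : R := \sum_(2 <= j < m.+1) (th j 0%N)%:R / pr ^+ j.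
have E : forall q : 'I_P,
    xi q = expi ((\sum_(a < P) th 1%N a * q ^ a)%N%:R / pr + t).
  move=> q; rewrite Hxi; congr expi.
  rewrite big_ltn ?ltnS //; congr (_ + _).
    rewrite expn1 -mulr_suml big_mkord natr_sum; congr (_ / _).
    by apply: eq_bigr => a _; rewrite natrM.
  rewrite /t; apply: eq_big_nat => j /andP[hj _].
  rewrite big_ltn // expn0 mulr1 big_nat big1 ?addr0 ?natrX //.
  move=> a /andP[ha _]; rewrite Hth // ?mul0r //.
  by rewrite -lt0n.
have XP : forall q, xi q ^+ P = expi (pr * t).
  move=> q; rewrite E expiX -/pr mulrDr (mulrC pr (_ / pr)) divfK //.
  by rewrite expiD expin mul1r.
have H2 : expi (pr * (pr * t)) = 1.
  have : (\prod_q xi q) ^+ P = 1 by rewrite Hprod expr1n.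
  rewrite (eq_bigr _ (fun q _ => E q)) -expi_sum big_split /= -mulr_suml.
  rewrite sumr_const card_ord -natr_sum.
  rewrite expiX -/pr mulrDr (mulrC pr (_ / pr)) divfK // expiD expin mul1r.
  by rewrite -mulr_natl.
have [m_eq1 | m_ge2] : m = 1%N \/ (2 <= m)%N.
  by case: m m1 {Hxi E t XP H2 th0} => [|[|m]] //; [left | right].
  have t0 : t = 0 by rewrite /t m_eq1 big_geq.
  have th20 : th 2%N 0%N = 0%N by apply: th0; rewrite m_eq1.
  by move=> q; rewrite XP t0 th20 mulr0 mul0r.
set t' : R := \sum_(3 <= j < m.+1) (th j 0%N)%:R / pr ^+ j.
have ht : t = (th 2%N 0%N)%:R / pr ^+ 2 + t' by rewrite /t big_ltn.
have prpos : 0 < pr by rewrite ltr0n.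
have ht' : t' = 0.
  have hu : expi (pr * (pr * t')) = 1.
    move: H2; rewrite ht.
    have -> : pr * (pr * ((th 2%N 0%N)%:R / pr ^+ 2 + t')) =
              (th 2%N 0%N)%:R + pr * (pr * t').
      by field; rewrite -natrD pnatr_eq0.
    by rewrite expiD expin mul1r.
  have t'0 : 0 <= t'.
    by apply: sumr_ge0 => j _; rewrite divr_ge0 ?exprn_ge0 // ltW.
  have t'le : t' <= pr / pr ^+ 3 - pr / pr ^+ m.+1.
    rewrite /t'; have -> : m.+1 = (3 + (m - 2))%N by lia.
    rewrite -geo //; apply: ler_sum => j _.
    apply: ler_wpM2r; first by rewrite invr_ge0 exprn_ge0 // ltW.
    have : ((th j 0%N).+1)%:R <= pr by rewrite ler_nat thlt.
    by rewrite -natr1 => h; lra.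
  have w0 : 0 < pr / pr ^+ m.+1 by rewrite divr_gt0 // exprn_gt0.
  have u1 : pr * (pr * t') < 1.
    have h1 : pr * (pr * t') <= pr * (pr * (pr / pr ^+ 3 - pr / pr ^+ m.+1)).
      by do 2 (apply: ler_wpM2l; first exact: ltW).
    have e : pr * (pr * (pr / pr ^+ 3 - pr / pr ^+ m.+1)) =
              1 - pr * (pr * (pr / pr ^+ m.+1)).
      by field; rewrite expf_neq0 // -natrD pnatr_eq0.
    rewrite e in h1.
    have : 0 < pr * (pr * (pr / pr ^+ m.+1)) by do 2 (apply: mulr_gt0 => //).
    move: h1; set X := pr * (pr * t'); set Y := pr * (pr * (pr / pr ^+ m.+1)).
    by move=> h1 h2; lra.
  have u0 : 0 <= pr * (pr * t') by rewrite !mulr_ge0 // ltW.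
  have := @expi_eq1 (pr * (pr * t')); rewrite u0 u1 => /(_ isT hu).
  by move/eqP; rewrite !mulf_eq0 (negPf pr0) /= => /eqP.
move=> q; rewrite XP ht ht' addr0; congr expi.
by field; rewrite -natrD pnatr_eq0.
Qed.
End E.
Section M.
Variable R : realType.
Local Notation C := (complex R).
Variable p' : nat.
Local Notation P := p'.+2.

Lemma XmxE (r c : 'I_P) : @Xmx R P r c = ((r == c + 1)%:R).
Proof.
rewrite /Xmx mxE.
have -> : ((r : nat) == (c.+1 %% P)%N) = (r == c + 1).
  apply/eqP/eqP => [h|->].
    by apply: val_inj; rewrite /= h modnDmr addn1.
  by rewrite /= modnDmr addn1.
by case: (r == c + 1).
Qed.

Lemma XmxX k : @Xmx R P ^+ k = \matrix_(r, c) ((r == c + k%:R)%:R).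
Proof.
elim: k => [|k IH].
  by apply/matrixP => r c; rewrite !mxE addr0 eq_sym.
rewrite exprSr IH; apply/matrixP => r c; rewrite mxE.
under eq_bigr => j _ do rewrite XmxE mxE.
rewrite (bigD1 (c + 1)) //= big1 ?addr0.
  by rewrite eqxx mulr1 -addrA (addrC 1) -natr1 mxE.
by move=> j /negbTE hj; rewrite hj mulr0.
Qed.
Lemma ZpP : (P%:R : 'I_P) = 0.
Proof. by apply/val_inj; rewrite /= Zp_nat /= modnDm add1n modnn. Qed.

Lemma SXX (xi : 'I_P -> C) (b : 'I_P) k :
  (Smx xi *m Xmx R P ^+ b) ^+ k =
  \matrix_(r, c) ((r == c + k%:R * b)%:R * \prod_(i < k) xi (r - i%:R * b)).
Proof.
elim: k => [|k IH].
  by apply/matrixP => r c; rewrite !mxE big_ord0 mul0r addr0 eq_sym mulr1.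
rewrite exprSr IH; apply/matrixP => r c.
rewrite -mulmxE !mxE.
under eq_bigr => j _ do rewrite mxE /Smx mul_diag_mx XmxX !mxE natr_Zp.
rewrite (bigD1 (c + b)) //= [X in _ + X]big1 ?addr0.
  rewrite eqxx mulr1 big_ord_recr /=.
  have -> : c + b + k%:R * b = c + k.+1%:R * b.
    by rewrite -addrA -[in RHS]natr1 mulrDl mul1r (addrC b).
  case: eqP => [->|]; last by rewrite !mul0r.
  rewrite !mul1r; congr (_ * _); apply: congr1.
  by rewrite -natr1 mulrDl mul1r addrA addrAC addrK.
by move=> j /negbTE hj; rewrite hj !mulr0.
Qed.

Lemma XP : Xmx R P ^+ P = 1.
Proof.
by apply/matrixP => r c; rewrite XmxX !mxE ZpP addr0 eq_sym.
Qed.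

Lemma SXP (xi : 'I_P -> C) (b : 'I_P) : prime P -> (b : nat) != 0%N ->
  (Smx xi *m Xmx R P ^+ b) ^+ P = (\prod_q xi q)%:M.
Proof.
move=> pP b0.
have bu : b \is a GRing.unit.
  have h : ((b : nat)%:R : 'Z_P) \is a GRing.unit.
    by rewrite unitZpE // prime_coprime // gtnNdvd // lt0n.
  by move: h; rewrite natr_Zp.
rewrite SXX; apply/matrixP => r c; rewrite !mxE ZpP mul0r addr0 eq_sym.
case: eqP => [<-|]; last by rewrite mul0r mulr0n.
rewrite mul1r mulr1n.
have hinj : injective (fun i : 'I_P => c - i * b).
  by move=> i j /= /addrI /oppr_inj /(mulIr bu).
rewrite [in RHS](reindex_inj hinj) /=.
by apply: eq_bigr => i _; rewrite natr_Zp.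
Qed.
Lemma detXn (A : 'M[C]_P) k : \det (A ^+ k) = \det A ^+ k.
Proof.
elim: k => [|k IH]; first by rewrite !expr0 det1.
by rewrite !exprS detM IH.
Qed.

Lemma detX : odd P -> \det (Xmx R P) = 1.
Proof.
move=> oP.
have inj : injective (fun r : 'I_P => r - 1) by move=> x y /addIr.
pose s := (perm inj : 'S_P).
have hX : Xmx R P = perm_mx s.
  apply/matrixP => r c; rewrite XmxE /perm_mx /row_perm !mxE permE.
  by rewrite subr_eq.
have hd : \det (Xmx R P) = (-1) ^+ s by rewrite hX (@det_perm C P s).
have h : (\det (Xmx R P)) ^+ P = 1 by rewrite -detXn XP det1.
move: h; rewrite hd.
case: (odd_perm s) => //=.
rewrite expr1 -signr_odd oP expr1 => /eqP.
rewrite -subr_eq0 -opprD oppr_eq0 => /eqP h2.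
have : (2%:R : C) != 0 by rewrite pnatr_eq0.
by rewrite mulr2n h2 eqxx.
Qed.
End M.
Section K.
Variable R : realType.
Local Notation C := (complex R).
Variable p n : nat.

Lemma kron_ext (A B : 'I_n -> 'M[C]_p) : (forall i, A i = B i) -> kron A = kron B.
Proof.
by move=> h; apply/matrixP => r c; rewrite !mxE; apply: eq_bigr => i _; rewrite h.
Qed.

Lemma kronM (A B : 'I_n -> 'M[C]_p) :
  kron A *m kron B = kron (fun i => A i *m B i).
Proof.
apply/matrixP => r c; rewrite !mxE.
under eq_bigr => k _ do rewrite !mxE -big_split /=.
under [RHS]eq_bigr => i _ do rewrite mxE.
rewrite bigA_distr_bigA /=.
rewrite (big_enum_val (fun f : {ffun 'I_n -> 'I_p} =>
   \prod_i (A i (enum_val r i) (f i) * B i (f i) (enum_val c i)))).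
by [].
Qed.
Lemma kron_scalar (c : 'I_n -> C) :
  kron (fun i => (c i)%:M : 'M[C]_p) = (\prod_i c i)%:M.
Proof.
apply/matrixP => r d; rewrite !mxE.
have [->|nrd] := eqVneq r d.
  by rewrite mulr1n; apply: eq_bigr => i _; rewrite mxE eqxx mulr1n.
rewrite mulr0n.
have hne : enum_val r != enum_val d :> {ffun 'I_n -> 'I_p}.
  by apply: contra nrd => /eqP /enum_val_inj ->.
have [i hi] : exists i, enum_val r i != enum_val d i :> 'I_p.
  apply/existsP; apply: (contraNT _ hne) => /existsPn h.
  by apply/eqP/ffunP => i; apply/eqP/negPn/h.
by rewrite (bigD1 i) //= mxE (negPf hi) mulr0n mul0r.
Qed.

Lemma kron1 : kron (fun i : 'I_n => 1 : 'M[C]_p) = 1.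
Proof.
by rewrite (kron_scalar (fun _ => 1)) big1.
Qed.

Lemma kronX (A : 'I_n -> 'M[C]_p) k :
  kron A ^+ k = kron (fun i => A i ^+ k).
Proof.
elim: k => [|k IH].
  by rewrite expr0 -kron1; apply: kron_ext => i; rewrite expr0.
rewrite exprSr IH -mulmxE kronM.
by apply: kron_ext => i; rewrite exprSr mulmxE.
Qed.

End K.

Section Final.
Variable R : realType.
Local Notation C := (complex R).
Variable p' : nat.
Local Notation P := p'.+2.

Lemma detK m (A : 'M[C]_P) : odd P -> inK m A -> \det A = 1.
Proof.
move=> oP; elim => {A}.
- move=> xi b [[xi' [_ hp e]] _].
  rewrite det_mulmx detXn detX // expr1n mulr1 e /Smx det_diag.
  by under eq_bigr do rewrite mxE.
- by rewrite det1.
- by move=> A B _ hA _ hB; rewrite detM hA hB mulr1.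
- by move=> A _ hA; rewrite det_inv hA invr1.
Qed.

Lemma SmxE (xi : 'I_P -> C) q : Smx xi q q = xi q.
Proof. by rewrite /Smx !mxE eqxx mulr1n. Qed.

Lemma SmxX (xi : 'I_P -> C) k : Smx xi ^+ k = Smx (fun q => xi q ^+ k).
Proof.
elim: k => [|k IH].
  by apply/matrixP => r c; rewrite /Smx !mxE expr0.
rewrite exprSr IH -mulmxE /Smx mul_diag_mx; apply/matrixP => r c.
rewrite !mxE; case: eqP => [->|]; first by rewrite !mulr1n exprSr.
by rewrite !mulr0n mulr0.
Qed.

Lemma detSmx (xi : 'I_P -> C) : \det (Smx xi) = \prod_q xi q.
Proof. by rewrite /Smx det_diag; under eq_bigr do rewrite mxE. Qed.

End Final.

Theorem lemma4 (R : realType) (p m n : nat)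
    (p_prime : prime p) (p_odd : odd p) (m_ge1 : (1 <= m)%N) (n_ge1 : (1 <= n)%N)
    (M : 'I_n -> 'M[complex R]_p)
    (MK : forall i, inK m (M i))
    (xi : 'I_n -> 'I_p -> complex R) (b : 'I_n -> 'I_p)
    (theta : 'I_n -> nat -> nat -> nat)
    (I : {set 'I_n})
    (HnotI : forall i, i \notin I ->
        M i = Smx (xi i) *m @Xmx R p ^+ b i /\ (b i : nat) != 0%N)
    (HI : forall i, i \in I ->
        [/\ M i = Smx (xi i), inTpow m (Smx (xi i)),
            is_expansion m (theta i) (xi i) &
            forall j a, (2 <= j)%N -> a != 0%N -> theta i j a = 0%N])
    (Hsum : ((\sum_(i in I) theta i 2%N 0%N) %% p)%N = 0%N) :
  kron M ^+ p = 1.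
Proof.
destruct p as [|[|p']]; [by [] | by [] | ].
pose c i : complex R :=
  if i \in I then expi ((theta i 2%N 0%N)%:R / (p'.+2)%:R) else 1.
have hM : forall i, M i ^+ p'.+2 = (c i)%:M.
  move=> i; rewrite /c; case: (boolP (i \in I)) => iI.
    have [-> [[xi' [_ hp e]] _] hexp hth] := HI i iI.
    have exi : forall q, xi i q = xi' q.
      by move=> q; rewrite -SmxE e SmxE.
    have hp' : \prod_q xi i q = 1 by rewrite (eq_bigr _ (fun q _ => exi q)).
    have hq := xiP m_ge1 hexp hth hp'.
    rewrite SmxX; apply/matrixP => r s; rewrite /Smx !mxE hq.
    by [].
  have [-> b0] := HnotI i iI.
  have hd := detK p_odd (MK i).
  move: hd; rewrite (proj1 (HnotI i iI)) det_mulmx detXn detX // expr1n mulr1.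
  rewrite detSmx => hp.
  by rewrite SXP // hp.
rewrite kronX (kron_ext hM) kron_scalar.
have -> : \prod_i c i = 1.
  rewrite /c -big_mkcond /= -expi_sum -mulr_suml -natr_sum.
  have hs := divn_eq (\sum_(i in I) theta i 2%N 0%N) p'.+2.
  rewrite Hsum addn0 in hs.
  by rewrite hs natrM mulfK ?pnatr_eq0 // expin.
by [].
Qed.
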